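(* Let $K$ be an algebraically closed field of characteristic zero and $e_1\in 3+2\mathbb{N}$. Let $S\subset K^3$ be the surface $x_3^2+(x_1^{e_1}-x_2^2)x_1=0$, $S'\subset K^3$ the surface $\alpha^{2e_1}-4\beta\gamma=0$, $\sigma$ the involution $\sigma(\alpha,\beta,\gamma)=(-\alpha,\gamma,\beta)$ of $S'$, and $F:S'\to S$, $F(\alpha,\beta,\gamma)=(\alpha^2,\beta+\gamma,\alpha(\beta-\gamma))$. Then $F$ is the quotient map of the $\mathbb{Z}/2\mathbb{Z}$-action on $S'$ generated by $\sigma$; in particular $S=S'/\!/(\mathbb{Z}/2\mathbb{Z})$, i.e. via $F$ the ring $\mathcal{O}(S)$ is the ring of $\sigma^*$-invariants of $\mathcal{O}(S')$.
   Context: $\sigma^*(f)=f\circ\sigma$. *)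

(* Defs.v *)
From HB Require Import structures.
From mathcomp Require Import all_boot all_order all_algebra.
From mathcomp Require Export mpoly.
From mathcomp Require Export all_boot all_order all_algebra.
Set Implicit Arguments. Unset Strict Implicit. Unset Printing Implicit Defensive.
Import Order.TTheory GRing.Theory Num.Theory.
Local Open Scope ring_scope.

Definition pt3 (K : Type) := (K * K * K)%type.

Definition ev3 {K : closedFieldType} (p : {mpoly K[3]}) (x : pt3 K) : K :=
  let: (a, b, c) := x in p.@[fun i : 'I_3 => nth 0 [:: a; b; c] i].

Definition onS {K : closedFieldType} (e1 : nat) (x : pt3 K) : Prop :=
  let: (x1, x2, x3) := x in x3 ^+ 2 + (x1 ^+ e1 - x2 ^+ 2) * x1 = 0.

Definition onS' {K : closedFieldType} (e1 : nat) (x : pt3 K) : Prop :=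
  let: (a, b, c) := x in a ^+ (2 * e1) - 4 * b * c = 0.

Definition sigma3 {K : closedFieldType} (x : pt3 K) : pt3 K :=
  let: (a, b, c) := x in (- a, c, b).

Definition Fmap {K : closedFieldType} (x : pt3 K) : pt3 K :=
  let: (a, b, c) := x in (a ^+ 2, b + c, a * (b - c)).

(* f is a regular function on the (closed) subset P of K^3, i.e. the
   restriction to P of a polynomial function: an element of O(P). *)
Definition regular_on {K : closedFieldType} (P : pt3 K -> Prop)
  (f : pt3 K -> K) : Prop :=
  exists p : {mpoly K[3]}, forall x, P x -> f x = ev3 p x.

(* Main.v *)
Require Import Defs.
From HB Require Import structures.
From mathcomp Require Import all_boot all_order all_algebra.
From mathcomp Require Import mpoly.
From mathcomp Require Import ring.
Import Order.TTheory GRing.Theory Num.Theory.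
Local Open Scope ring_scope.

Section S.
Variable K : closedFieldType.
Local Notation pt := (pt3 K).

Lemma ev3E (p : {mpoly K[3]}) (x : pt) :
  ev3 p x = p.@[fun i : 'I_3 => nth 0 [:: x.1.1; x.1.2; x.2] i].
Proof. by case: x => [[a b] c]. Qed.

Lemma ev3_ind (Pr : (pt -> K) -> Prop) (phi : pt -> pt) :
  (forall g h, (forall x, g x = h x) -> Pr g -> Pr h) ->
  (forall g h, Pr g -> Pr h -> Pr (fun x => g x + h x)) ->
  (forall c g, Pr g -> Pr (fun x => c * g x)) ->
  Pr (fun _ => 1) ->
  (forall g, Pr g -> Pr (fun x => (phi x).1.1 * g x)) ->
  (forall g, Pr g -> Pr (fun x => (phi x).1.2 * g x)) ->
  (forall g, Pr g -> Pr (fun x => (phi x).2 * g x)) ->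
  forall p, Pr (fun x => ev3 p (phi x)).
Proof.
move=> Hext Hadd Hsc H1 Ha Hb Hc.
have Hmon : forall i j k, Pr (fun x => (phi x).1.1 ^+ i * ((phi x).1.2 ^+ j * (phi x).2 ^+ k)).
  move=> i j k; elim: i => [|i IHi].
  - apply: (Hext (fun x => (phi x).1.2 ^+ j * (phi x).2 ^+ k)); first by move=> x; rewrite expr0 mul1r.
    elim: j => [|j IHj].
    + apply: (Hext (fun x => (phi x).2 ^+ k)); first by move=> x; rewrite expr0 mul1r.
      elim: k => [|k IHk]; first by apply: (Hext (fun _ => 1)) => // x; rewrite expr0.
      by apply: Hext (Hc _ IHk) => x; rewrite exprS.
    + by apply: Hext (Hb _ IHj) => x; rewrite exprS mulrA.
  - by apply: Hext (Ha _ IHi) => x; rewrite exprS mulrA.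
elim/mpolyind => [|c m p _ _ IH].
  apply: (Hext (fun x => 0 * 1)); [by move=> x; rewrite ev3E meval0 mul0r | exact: Hsc].
apply: Hext (Hadd _ _ (Hsc c _ (Hmon (m ord0) (m (@Ordinal 3 1 isT)) (m (@Ordinal 3 2 isT)))) IH) => x.
rewrite !ev3E mevalD mevalZ mevalX !big_ord_recr big_ord0 /= mul1r -mulrA.
congr (_ * (_ * (_ * _)) + _); by congr (_ ^+ m _); apply/val_inj.
Qed.

Lemma ev3X (i : 'I_3) (y : pt) : ev3 'X_i y = nth 0 [:: y.1.1; y.1.2; y.2] i.
Proof. by rewrite ev3E mevalXU. Qed.

Lemma FmapE (x : pt) : Fmap x = (x.1.1 ^+ 2, x.1.2 + x.2, x.1.1 * (x.1.2 - x.2)).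
Proof. by case: x => [[a b] c]. Qed.

Lemma sigmaE (x : pt) : sigma3 x = (- x.1.1, x.2, x.1.2).
Proof. by case: x => [[a b] c]. Qed.

Lemma sig1 (x : pt) : (sigma3 x).1.1 = - x.1.1. Proof. by case: x => [[a b] c]. Qed.
Lemma sig2 (x : pt) : (sigma3 x).1.2 = x.2. Proof. by case: x => [[a b] c]. Qed.
Lemma sig3 (x : pt) : (sigma3 x).2 = x.1.2. Proof. by case: x => [[a b] c]. Qed.

Variable e1 : nat.

Lemma onS'E (x : pt) : onS' e1 x <-> x.1.1 ^+ (2 * e1) = 4 * x.1.2 * x.2.
Proof. by case: x => [[a b] c] /=; split => [/eqP|->]; rewrite ?subrr // subr_eq0 => /eqP. Qed.

Definition R (phi : pt -> pt) (g : pt -> K) :=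
  exists P : {mpoly K[3]}, forall x, onS' e1 x -> g x = ev3 P (phi x).

Section Rclos.
Variable phi : pt -> pt.
Lemma R_ext g h : (forall x, onS' e1 x -> g x = h x) -> R phi g -> R phi h.
Proof. by move=> E [P HP]; exists P => x Hx; rewrite -E // HP. Qed.
Lemma R_add g h : R phi g -> R phi h -> R phi (fun x => g x + h x).
Proof. by move=> [P HP] [Q HQ]; exists (P + Q) => x Hx; rewrite HP // HQ // !ev3E mevalD. Qed.
Lemma R_mul g h : R phi g -> R phi h -> R phi (fun x => g x * h x).
Proof. by move=> [P HP] [Q HQ]; exists (P * Q) => x Hx; rewrite HP // HQ // !ev3E mevalM. Qed.
Lemma R_cst c : R phi (fun _ => c).
Proof. by exists c%:MP => x Hx; rewrite ev3E mevalC. Qed.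
Lemma R_X (i : 'I_3) : R phi (fun x => nth 0 [:: (phi x).1.1; (phi x).1.2; (phi x).2] i).
Proof. by exists 'X_i => x Hx; rewrite ev3X. Qed.
End Rclos.
Arguments R_ext {phi g h}.
Arguments R_add {phi g h}.
Arguments R_mul {phi g h}.
Arguments R_cst {phi}.

Local Notation A := (R Fmap).
Local Notation Rid := (R (fun x => x)).

Lemma A1 : A (fun x => x.1.1 ^+ 2).
Proof. by apply: R_ext (R_X Fmap ord0) => x _; rewrite FmapE. Qed.
Lemma A2 : A (fun x => x.1.2 + x.2).
Proof. by apply: R_ext (R_X Fmap (@Ordinal 3 1 isT)) => x _; rewrite FmapE. Qed.
Lemma A3 : A (fun x => x.1.1 * (x.1.2 - x.2)).
Proof. by apply: R_ext (R_X Fmap (@Ordinal 3 2 isT)) => x _; rewrite FmapE. Qed.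
Lemma A4 : A (fun x => (x.1.2 - x.2) ^+ 2).
Proof.
have H : A (fun x => (x.1.2 + x.2) * (x.1.2 + x.2) + (-1) * (x.1.1 ^+ 2) ^+ e1).
  apply: R_add; first exact: R_mul A2 A2.
  apply: R_mul; first exact: R_cst.
  have Hk : forall k, A (fun x => (x.1.1 ^+ 2) ^+ k).
    elim => [|k IH]; first by apply: R_ext (R_cst 1) => x _; rewrite expr0.
    by apply: R_ext (R_mul A1 IH) => x _; rewrite -exprS.
  exact: Hk.
apply: R_ext H => x /onS'E Hx; rewrite -exprM Hx; ring.
Qed.

Definition Bp (g : pt -> K) := exists g1 g2, A g1 /\ A g2 /\
  forall x, onS' e1 x -> g x = x.1.1 * g1 x + (x.1.2 - x.2) * g2 x.

Definition Pr (g : pt -> K) := A (fun x => g x + g (sigma3 x)) /\ Bp (fun x => g x - g (sigma3 x)).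

Hypothesis two : (2 : K) != 0.

Lemma Pr_all (q : {mpoly K[3]}) : Pr (fun x => ev3 q x).
Proof.
apply: (@ev3_ind Pr (fun x => x)).
- move=> g h E [HA [g1 [g2 [H1 [H2 H3]]]]]; split.
    by apply: R_ext HA => x _; rewrite !E.
  by exists g1, g2; do 2!split => //; move=> x Hx; rewrite -!E H3.
- move=> g h [HA [g1 [g2 [H1 [H2 H3]]]]] [HA' [h1 [h2 [H1' [H2' H3']]]]]; split.
    by apply: R_ext (R_add HA HA') => x _; ring.
  exists (fun x => g1 x + h1 x), (fun x => g2 x + h2 x); split; [exact: R_add|split; [exact: R_add|]].
  move=> x Hx; have := H3 x Hx; have := H3' x Hx; move=> e e'.
  transitivity ((g x - g (sigma3 x)) + (h x - h (sigma3 x))); first ring.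
  rewrite e e'; ring.
- move=> c g [HA [g1 [g2 [H1 [H2 H3]]]]]; split.
    by apply: R_ext (R_mul (R_cst c) HA) => x _; ring.
  exists (fun x => c * g1 x), (fun x => c * g2 x); split; [exact: R_mul (R_cst c) H1|split; [exact: R_mul (R_cst c) H2|]].
  move=> x Hx; transitivity (c * (g x - g (sigma3 x))); first ring.
  rewrite H3 //; ring.
- split; first exact: R_cst.
  exists (fun _ => 0), (fun _ => 0); split; [exact: R_cst|split; [exact: R_cst|]].
  by move=> x _; ring.
- move=> g [HA [g1 [g2 [H1 [H2 H3]]]]]; split.
    apply: R_ext (R_add (R_mul A1 H1) (R_mul A3 H2)) => x Hx.
    rewrite /= ?sig1 ?sig2 ?sig3; symmetry.
    transitivity (x.1.1 * (g x - g (sigma3 x))); first ring.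
    rewrite H3 //; ring.
  exists (fun x => g x + g (sigma3 x)), (fun _ => 0); split => //; split; first exact: R_cst.
  move=> x Hx; rewrite /= ?sig1 ?sig2 ?sig3; ring.
- move=> g [HA [g1 [g2 [H1 [H2 H3]]]]]; split.
    apply: R_ext (R_mul (R_cst (2^-1)) (R_add (R_mul A2 HA) (R_add (R_mul A3 H1) (R_mul A4 H2)))) => x Hx.
    rewrite /= ?sig1 ?sig2 ?sig3; symmetry.
    transitivity (2^-1 * ((x.1.2 + x.2) * (g x + g (sigma3 x)) + (x.1.2 - x.2) * (g x - g (sigma3 x)))); first by field.
    rewrite H3 //; ring.
  exists (fun x => 2^-1 * ((x.1.2 + x.2) * g1 x)), (fun x => 2^-1 * ((x.1.2 + x.2) * g2 x + (g x + g (sigma3 x)))).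
  split; first exact: R_mul (R_cst _) (R_mul A2 H1).
  split; first exact: R_mul (R_cst _) (R_add (R_mul A2 H2) HA).
  move=> x Hx; rewrite /= ?sig1 ?sig2 ?sig3.
  transitivity (2^-1 * ((x.1.2 + x.2) * (g x - g (sigma3 x)) + (x.1.2 - x.2) * (g x + g (sigma3 x)))); first by field.
  rewrite H3 //; ring.
- move=> g [HA [g1 [g2 [H1 [H2 H3]]]]]; split.
    apply: R_ext (R_mul (R_cst (2^-1)) (R_add (R_mul A2 HA) (R_mul (R_cst (-1)) (R_add (R_mul A3 H1) (R_mul A4 H2))))) => x Hx.
    rewrite /= ?sig1 ?sig2 ?sig3; symmetry.
    transitivity (2^-1 * ((x.1.2 + x.2) * (g x + g (sigma3 x)) - (x.1.2 - x.2) * (g x - g (sigma3 x)))); first by field.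
    rewrite H3 //; ring.
  exists (fun x => 2^-1 * ((x.1.2 + x.2) * g1 x)), (fun x => 2^-1 * ((x.1.2 + x.2) * g2 x + (-1) * (g x + g (sigma3 x)))).
  split; first exact: R_mul (R_cst _) (R_mul A2 H1).
  split; first exact: R_mul (R_cst _) (R_add (R_mul A2 H2) (R_mul (R_cst _) HA)).
  move=> x Hx; rewrite /= ?sig1 ?sig2 ?sig3.
  transitivity (2^-1 * ((x.1.2 + x.2) * (g x - g (sigma3 x)) - (x.1.2 - x.2) * (g x + g (sigma3 x)))); first by field.
  rewrite H3 //; ring.
Qed.

End S.
Arguments R_ext {K e1 phi g h}.
Arguments R_add {K e1 phi g h}.
Arguments R_mul {K e1 phi g h}.
Arguments R_cst {K e1 phi}.
Arguments R_X {K e1} phi i.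
Arguments Pr_all {K e1}.

Theorem lemma10 (K : closedFieldType) (hchar : [pchar K] =i pred0)
  (e1 : nat) (he1 : exists k : nat, e1 = (3 + 2 * k)%N) :
  [/\ (* sigma is an involution of S' and F maps S' into S, with F o sigma = F *)
      (forall x : pt3 K, onS' e1 x -> onS' e1 (sigma3 x) /\ sigma3 (sigma3 x) = x),
      (forall x : pt3 K, onS' e1 x -> onS e1 (Fmap x) /\ Fmap (sigma3 x) = Fmap x),
      (* F^* maps O(S) into O(S') *)
      (forall f : pt3 K -> K, regular_on (onS e1) f -> regular_on (onS' e1) (f \o Fmap)),
      (* F^* : O(S) -> O(S') is injective *)
      (forall f g : pt3 K -> K, regular_on (onS e1) f -> regular_on (onS e1) g ->
         (forall x : pt3 K, onS' e1 x -> f (Fmap x) = g (Fmap x)) ->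
         forall y : pt3 K, onS e1 y -> f y = g y)
    & (* every sigma^*-invariant element of O(S') lies in the image of F^* *)
      (forall h : pt3 K -> K, regular_on (onS' e1) h ->
         (forall x : pt3 K, onS' e1 x -> h (sigma3 x) = h x) ->
         exists f : pt3 K -> K, regular_on (onS e1) f /\
           forall x : pt3 K, onS' e1 x -> f (Fmap x) = h x)].
Proof.
have two : (2 : K) != 0 by move/pcharf0P: hchar => hc; rewrite hc.
have P1 : forall x : pt3 K, onS' e1 x -> onS' e1 (sigma3 x) /\ sigma3 (sigma3 x) = x.
  case=> [[a b] c] /= H; split; last by rewrite opprK.
  by rewrite exprM sqrrN -exprM -H; ring.
have P2 : forall x : pt3 K, onS' e1 x -> onS e1 (Fmap x) /\ Fmap (sigma3 x) = Fmap x.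
  case=> [[a b] c] /= /eqP; rewrite subr_eq0 => /eqP H; split; last by congr (_, _, _); ring.
  by rewrite -exprM H; ring.
split => //.
- move=> f [p Hp].
  have : @R K e1 (fun x => x) (fun x => ev3 p (Fmap x)).
    apply: (@ev3_ind K (@R K e1 (fun x => x)) Fmap).
    + by move=> g h E; apply: R_ext => x _; rewrite E.
    + by move=> g h; apply: R_add.
    + by move=> c g; apply: R_mul; apply: R_cst.
    + exact: R_cst.
    + move=> g; apply: R_mul.
      apply: R_ext (R_mul (R_X (fun x => x) ord0) (R_X (fun x => x) ord0)) => x _.
      by rewrite FmapE /= expr2.
    + move=> g; apply: R_mul.
      apply: R_ext (R_add (R_X (fun x => x) (@Ordinal 3 1 isT)) (R_X (fun x => x) (@Ordinal 3 2 isT))) => x _.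
      by rewrite FmapE.
    + move=> g; apply: R_mul.
      apply: R_ext (R_mul (R_X (fun x => x) ord0) (R_add (R_X (fun x => x) (@Ordinal 3 1 isT)) (R_mul (R_cst (-1)) (R_X (fun x => x) (@Ordinal 3 2 isT))))) => x _.
      by rewrite FmapE /=; ring.
  move=> [q Hq]; exists q => x Hx /=; rewrite Hp; first exact: Hq.
  by case: (P2 x Hx).
- move=> f g _ _ Hfg y Hy.
  have [x [Hx <-]] : exists x, onS' e1 x /\ Fmap x = y.
    case: y Hy => [[y1 y2] y3] /= Hy.
    have [r hr] := @solve_monicpoly K 2 (nth 0 [:: y1]) isT.
    rewrite !big_ord_recr big_ord0 /= add0r expr0 mulr1 mul0r addr0 in hr.
    case: (eqVneq r 0) => [r0|rn0].
      have y10 : y1 = 0 by rewrite -hr r0 expr0n.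
      have y30 : y3 = 0.
        have : y3 ^+ 2 = 0 by rewrite -[RHS]Hy y10 mulr0 addr0.
        by move/eqP; rewrite expf_eq0 => /andP[_ /eqP].
      exists (0, y2, 0); split.
        case: he1 => k ->; rewrite /= expr0n /=; ring.
      by rewrite /= y10 y30; congr (_, _, _); ring.
    exists (r, 2^-1 * (y2 + y3 / r), 2^-1 * (y2 - y3 / r)); split.
      rewrite /= exprM hr.
      have Hy' : y3 ^+ 2 = - ((y1 ^+ e1 - y2 ^+ 2) * y1) by apply/(addIr ((y1 ^+ e1 - y2 ^+ 2) * y1)); rewrite Hy; ring.
      have y1n : y1 != 0 by rewrite -hr expf_neq0.
      have e : 4 * (2^-1 * (y2 + y3 / r)) * (2^-1 * (y2 - y3 / r)) = y2 ^+ 2 - y3 ^+ 2 / y1.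
        by rewrite -hr; field; rewrite ?rn0 ?two ?y1n.
      by rewrite e Hy'; field; rewrite ?rn0 ?two ?y1n.
    by rewrite /= hr; congr (_, _, _); field; rewrite ?rn0 ?two ?y1n.
  exact: Hfg.
- move=> h [q Hq] Hinv.
  have [[P HP] _] := @Pr_all K e1 two q.
  exists (fun y => ev3 (2^-1 *: P) y); split; first by exists (2^-1 *: P).
  move=> x Hx; rewrite ev3E mevalZ -ev3E -HP // -!Hq //; last by case: (P1 x Hx).
  by rewrite Hinv //; field.
Qed.
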